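(* Let $n,m,N$ be positive integers, $\mathbf{x}=(x_1,\ldots,x_n)$, and let $p_1,\ldots,p_N,q_1,\ldots,q_N,g_1,\ldots,g_m\in\mathbb{R}[\mathbf{x}]$. Let $\mathbf{K}=\{\mathbf{x}\in\mathbb{R}^n\mid g_j(\mathbf{x})\ge 0,\ j=1,\ldots,m\}$ and assume that $\mathbf{K}$ is compact and $q_i>0$ on $\mathbf{K}$ for every $i\in[N]$. Let $\rho=\inf_{\mathbf{x}\in\mathbf{K}}\sum_{i=1}^N p_i(\mathbf{x})/q_i(\mathbf{x})$. Consider the problem \[ \sup_{c\in\mathbb{R},\,h_2,\ldots,h_N\in\mathbb{R}[\mathbf{x}]}\ c\quad\text{s.t.}\quad p_1(\mathbf{x})+\Big(\sum_{i=2}^N h_i(\mathbf{x})-c\Big)q_1(\mathbf{x})\ge 0\ \ \forall\mathbf{x}\in\mathbf{K},\qquad p_i(\mathbf{x})-h_i(\mathbf{x})q_i(\mathbf{x})\ge 0\ \ \forall\mathbf{x}\in\mathbf{K},\ i=2,\ldots,N. \] Then the optimal value of this problem equals $\rho$.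
   Context: $[N]=\{1,\ldots,N\}$. $\mathbb{R}[\mathbf{x}]$ is the ring of real polynomials in $\mathbf{x}$. *)

(* Defs.v *)
From HB Require Import structures.
From mathcomp Require Import all_boot all_order all_algebra.
From mathcomp Require Import all_classical all_reals all_analysis.
From mathcomp Require mpoly.
Set Implicit Arguments. Unset Strict Implicit. Unset Printing Implicit Defensive.
Import Order.TTheory GRing.Theory Num.Theory.
Import numFieldNormedType.Exports.
Local Open Scope classical_set_scope.
Local Open Scope ring_scope.

Definition rpoly (R : realType) (n : nat) := mpoly.mpoly n R.

Definition peval (R : realType) (n : nat) (p : rpoly R n) (x : 'rV[R]_n) : R :=
  mpoly.meval (fun i => x ord0 i) p.

Definition semialg (R : realType) (n m : nat) (g : 'I_m -> rpoly R n)
  : set 'rV[R]_n := [set x | forall j, 0 <= peval (g j) x].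

(* rho = inf_{x in K} sum_i p_i(x)/q_i(x), as an extended real (+oo if K empty) *)
Definition rho (R : realType) (n m N : nat) (p q : 'I_N -> rpoly R n)
  (g : 'I_m -> rpoly R n) : \bar R :=
  ereal_inf [set (\sum_(i < N) peval (p i) x / peval (q i) x)%:E
            | x in semialg g].

(* Feasibility of (c, h_2..h_N); index 0 : 'I_N plays the role of 1 in [N];
   the component h at index 0 is irrelevant. *)
Definition feasible (R : realType) (n m N : nat) (p q : 'I_N -> rpoly R n)
  (g : 'I_m -> rpoly R n) (c : R) (h : 'I_N -> rpoly R n) : Prop :=
  (forall i : 'I_N, nat_of_ord i = 0%N -> forall x, semialg g x ->
     0 <= peval (p i) x +
          ((\sum_(k < N | nat_of_ord k != 0%N) peval (h k) x) - c)
            * peval (q i) x) /\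
  (forall i : 'I_N, nat_of_ord i != 0%N -> forall x, semialg g x ->
     0 <= peval (p i) x - peval (h i) x * peval (q i) x).

Definition optval (R : realType) (n m N : nat) (p q : 'I_N -> rpoly R n)
  (g : 'I_m -> rpoly R n) : \bar R :=
  ereal_sup [set c%:E | c in [set c : R | exists h, feasible p q g c h]].

(* Main.v *)
Require Import Defs.
From HB Require Import structures.
From mathcomp Require Import all_boot all_order all_algebra.
From mathcomp Require Import all_classical all_reals all_analysis.
From mathcomp Require mpoly.
Import (canonicals, coercions) mpoly.
From mathcomp Require Import lra ring.
Import Order.TTheory GRing.Theory Num.Theory.
Import numFieldNormedType.Exports.
Local Open Scope classical_set_scope.
Local Open Scope ring_scope.

Lemma cont_sum (R : realType) (T : topologicalType) (I : Type) (s : seq I) (F : I -> T -> R) :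
  (forall i, continuous (F i)) -> continuous (fun x => \sum_(i <- s) F i x).
Proof.
move=> hF; elim: s => [|a s IH].
  by under eq_fun do rewrite big_nil; exact: cst_continuous.
under eq_fun do rewrite big_cons.
by move=> x; apply: continuousD; [exact: hF|exact: IH].
Qed.

Lemma cont_prod (R : realType) (T : topologicalType) (I : Type) (s : seq I) (F : I -> T -> R) :
  (forall i, continuous (F i)) -> continuous (fun x => \prod_(i <- s) F i x).
Proof.
move=> hF; elim: s => [|a s IH].
  by under eq_fun do rewrite big_nil; exact: cst_continuous.
under eq_fun do rewrite big_cons.
by move=> x; apply: continuousM; [exact: hF|exact: IH].
Qed.

Lemma peval_cont (R : realType) n (p : rpoly R n) : continuous (peval p).
Proof.
rewrite /peval.
under eq_fun do rewrite mpoly.mevalE.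
apply: cont_sum => m; move=> x; apply: continuousM; first exact: cst_continuous.
move: x; apply: (@cont_prod R _ _ _ (fun i (x : 'rV[R]_n) => x ord0 i ^+ (mpoly.fun_of_multinom m i))) => i y.
exact: (@continuous_comp _ _ _ (fun x : 'rV[R]_n => x ord0 i) ((@GRing.exp R)^~ (mpoly.fun_of_multinom m i)) y (@coord_continuous R 1 n ord0 i y) (@exprn_continuous R _ _)).
Qed.

Lemma approx (R : realType) n (K : set 'rV[R]_n) (hK : compact K)
  (p q : rpoly R n) (hq : forall x, K x -> 0 < peval q x) (e : R) (he : 0 < e) :
  exists h : rpoly R n, forall x, K x ->
    peval h x * peval q x <= peval p x /\ peval p x <= (peval h x + e) * peval q x.
Proof.
have [[x0 Kx0]|K0] := pselect (exists x, K x); last first.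
  by exists (0 : mpoly.mpoly n R) => x Kx; exfalso; apply: K0; exists x.
have Kne : K !=set0 by exists x0.
have cq : {within K, continuous (peval q)}.
  by apply: continuous_subspaceT; exact: peval_cont.
have cp : {within K, continuous (fun x => `|peval p x|)}.
  apply: continuous_subspaceT => x.
  have H1 := @continuous_comp _ _ _ (peval p) (fun r : R => `|r|) x (@peval_cont R n p x) (@norm_continuous R R^o (peval p x)).
  exact: H1.
have [xM /set_mem KxM HM] := EVT_max_rV Kne hK cq.
have [xd /set_mem Kxd Hd] := EVT_min_rV Kne hK cq.
have [xB /set_mem KxB HB] := EVT_max_rV Kne hK cp.
set M := peval q xM in HM; set d := peval q xd in Hd; set B := `|peval p xB| in HB.
have M0 : 0 < M by exact: hq.
have d0 : 0 < d by exact: hq.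
have qM x : K x -> peval q x <= M by move=> Kx; apply: HM; exact: mem_set.
have qd x : K x -> d <= peval q x by move=> Kx; apply: Hd; exact: mem_set.
have pB x : K x -> `|peval p x| <= B by move=> Kx; apply: HB; exact: mem_set.
have dM : d <= M by exact: qM.
set a := 1 - d / M.
have a0 : 0 <= a by rewrite subr_ge0 ler_pdivrMr // mul1r.
have a1 : `|a| < 1.
  by rewrite ger0_norm // ltrBlDr ltrDl divr_gt0.
have B1 : 0 < B + 1 by have := normr_ge0 (peval p xB); rewrite -/B; lra.
have eta0 : 0 < e / 2 * d / (B + 1).
  by rewrite divr_gt0 ?mulr_gt0 ?divr_gt0.
have [k Hk] : exists k, a ^+ k < e / 2 * d / (B + 1).
  have := cvgr0_norm_lt _ (cvg_expr a1) _ eta0.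
  case=> k0 _ Hk0; exists k0; have := Hk0 k0 (leqnn _).
  by rewrite /= ger0_norm // exprn_ge0.
pose c := mpoly.mpolyC n (M^-1).
pose h : mpoly.mpoly n R := (p : mpoly.mpoly n R) * c * \sum_(j < k) (1 - c * (q : mpoly.mpoly n R)) ^+ j - mpoly.mpolyC n (e / 2).
exists h => x Kx.
set r := 1 - peval q x / M.
have hx : peval h x * peval q x = peval p x * (1 - r ^+ k) - e / 2 * peval q x.
  rewrite /h /peval mpoly.mevalB !mpoly.mevalM mpoly.mevalC rmorph_sum /=.
  under eq_bigr do rewrite rmorphXn /= mpoly.mevalB mpoly.meval1 mpoly.mevalM mpoly.mevalC.
  rewrite mulrBl; congr (_ - _).
  have := subrX1 r k; rewrite -/(peval q x) (mulrC (M^-1)) -/r => E.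
  rewrite -mulrA -mulrA; congr (_ * _).
  rewrite /c mpoly.mevalC -opprB E /r. field. by rewrite lt0r_neq0.
have r0 : 0 <= r by rewrite subr_ge0 ler_pdivrMr // mul1r qM.
have ra : r <= a.
  rewrite lerD2l lerN2 ler_pM2r ?invr_gt0 //; exact: qd.
have qx := hq x Kx.
have bound : `|peval p x * r ^+ k| <= e / 2 * peval q x.
  rewrite normrM (ger0_norm (exprn_ge0 _ r0)).
  apply: (le_trans (y := B * a ^+ k)).
    apply: ler_pM; [exact: normr_ge0|exact: exprn_ge0|exact: pB|].
    by rewrite lerXn2r // nnegrE.
  apply: (le_trans (y := (B + 1) * a ^+ k)).
    by rewrite ler_wpM2r ?exprn_ge0 // lerDl.
  rewrite -ler_pdivlMl // mulrC; apply: (le_trans (ltW Hk)).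
  rewrite ler_pM2r ?invr_gt0 // ler_pM2l ?divr_gt0 //; exact: qd.
move: bound; rewrite ler_norml => /andP [b1 b2].
split; first by rewrite hx; lra.
by rewrite mulrDl hx; lra.
Qed.

Theorem theorem3p1 (R : realType) (n m N : nat)
  (hn : (0 < n)%N) (hm : (0 < m)%N) (hN : (0 < N)%N)
  (p q : 'I_N -> rpoly R n) (g : 'I_m -> rpoly R n)
  (hK : compact (semialg g))
  (hq : forall i : 'I_N, forall x, semialg g x -> 0 < peval (q i) x) :
  optval p q g = rho p q g.
Proof.
pose F x := \sum_(i < N) peval (p i) x / peval (q i) x.
pose i0 : 'I_N := Ordinal hN.
have Hi0 (i : 'I_N) : (nat_of_ord i != 0%N) = (i != i0).
  by rewrite -val_eqE.
have Fsplit x : F x = peval (p i0) x / peval (q i0) x +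
    \sum_(i < N | nat_of_ord i != 0%N) peval (p i) x / peval (q i) x.
  by rewrite /F (bigD1 i0) //=; congr (_ + _); apply: eq_bigl => i; rewrite Hi0.
have rholb x : semialg g x -> (rho p q g <= (F x)%:E)%E.
  by move=> Kx; apply: ereal_inf_lbound; exists x.
apply/eqP; rewrite eq_le; apply/andP; split.
  apply: ge_ereal_sup => _ [c [h [H0 H1]] <-].
  apply: le_ereal_inf_tmp => _ [x Kx <-]; rewrite lee_fin.
  rewrite -/(F x) Fsplit.
  have hb : \sum_(k < N | nat_of_ord k != 0%N) peval (h k) x <=
      \sum_(i < N | nat_of_ord i != 0%N) peval (p i) x / peval (q i) x.
    apply: ler_sum => i Hi; have := H1 i Hi x Kx; have qx := hq i x Kx.
    rewrite ler_pdivlMr // => H; lra.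
  have A := H0 i0 erefl x Kx; have q0 := hq i0 x Kx.
  have : c - \sum_(k < N | nat_of_ord k != 0%N) peval (h k) x <= peval (p i0) x / peval (q i0) x.
    rewrite ler_pdivlMr //; lra.
  lra.
have key c : (forall x, semialg g x -> c <= F x) -> forall e, 0 < e -> ((c - e)%:E <= optval p q g)%E.
  move=> Hc e he; apply: ereal_sup_ubound; exists (c - e) => //.
  have N0 : (0 : R) < N%:R by rewrite ltr0n.
  have e'0 : 0 < e / N%:R by rewrite divr_gt0.
  have [h Hh] := choice (fun i => @approx R n _ hK (p i) (q i) (hq i) _ e'0).
  exists h; split; last first.
    move=> i _ x Kx; have [H _] := Hh i x Kx; lra.
  move=> i1 i0E x Kx.
  have -> : i1 = i0 by apply: val_inj; exact: i0E.
  have q0 := hq i0 x Kx.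
  have S1 : \sum_(i < N | nat_of_ord i != 0%N) peval (p i) x / peval (q i) x <=
      \sum_(i < N | nat_of_ord i != 0%N) (peval (h i) x + e / N%:R).
    apply: ler_sum => j _; have [_ H] := Hh j x Kx; have qx := hq j x Kx.
    by rewrite ler_pdivrMr.
  have S2 : \sum_(i < N | nat_of_ord i != 0%N) e / N%:R <= e.
    apply: (le_trans (y := \sum_(i < N) e / N%:R)).
      rewrite [X in X <= _]big_mkcond /=; apply: ler_sum => i _.
      by case: ifP => _ //; exact: ltW.
    rewrite sumr_const card_ord.
    have -> : e / N%:R *+ N = e / N%:R * N%:R by rewrite mulr_natr.
    by rewrite divfK // lt0r_neq0.
  rewrite big_split /= in S1.
  have := Hc x Kx; rewrite Fsplit => HF.
  have : c - e - \sum_(k < N | nat_of_ord k != 0%N) peval (h k) x <= peval (p i0) x / peval (q i0) x.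
    lra.
  rewrite ler_pdivlMr // => H; lra.
case Er: (rho p q g) => [r| |].
- apply/lee_subgt0Pr => e he; apply: key => // x Kx.
  by have := rholb x Kx; rewrite Er lee_fin.
- have Hall c x : semialg g x -> c <= F x.
    by move=> Kx; have := rholb x Kx; rewrite Er.
  case Eo: (optval p q g) => [s| |] //.
  + have K1 := key (s + 2)%R (Hall (s + 2)%R) 1%R (@ltr01 R).
    move: K1; rewrite Eo lee_fin => K1; exfalso; clear -K1; lra.
  + by have := key 0 (Hall 0) 1 (@ltr01 R); rewrite Eo.
- exact: leNye.
Qed.
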